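(* Let $\epsilon\in(0,1)$, $u_0\in\mathbb{R}\setminus\{0,1,-1\}$, and let $h^*=\frac{2\epsilon^2}{u_0^2+|u_0|}$ if $|u_0|>1$ and $h^*=\epsilon^2$ if $0<|u_0|<1$. For every $h\in(0,h^*]$, any real sequence $(u_n)_{n\ge0}$ starting at $u_0$ and satisfying the Crank–Nicolson scheme $$\frac{u_n-u_{n-1}}{h}+\frac{1}{2\epsilon^2}\big(u_n^3-u_n\big)+\frac{1}{2\epsilon^2}\big(u_{n-1}^3-u_{n-1}\big)=0,\qquad n\ge1,$$ satisfies $E(u_n)\le E(u_{n-1})$ for all $n\ge1$, where $E(v)=\frac{1}{4\epsilon^2}(v^2-1)^2$.
   Context: The scheme discretizes the ODE $u'(t)+\frac{1}{\epsilon^2}(u^3-u)=0$, $u(0)=u_0$. For $h\le2\epsilon^2$ each step equation has a unique real solution. *)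

(* Defs.v *)
From Stdlib Require Import Reals Lra.
Open Scope R_scope.

Definition energy (eps v : R) : R := (v ^ 2 - 1) ^ 2 / (4 * eps ^ 2).

Definition hstar (eps u0 : R) : R :=
  if Rlt_dec 1 (Rabs u0) then 2 * eps ^ 2 / (u0 ^ 2 + Rabs u0) else eps ^ 2.

Definition cn_step (eps h a b : R) : Prop :=
  (b - a) / h + (b ^ 3 - b) / (2 * eps ^ 2) + (a ^ 3 - a) / (2 * eps ^ 2) = 0.

(* Main.v *)
Require Import Defs.
From Stdlib Require Import Reals Lra Psatz.
Open Scope R_scope.

Lemma step_eq eps h a b : 0 < eps -> 0 < h -> cn_step eps h a b ->
  b - a + (h / (2 * eps ^ 2)) * (b ^ 3 - b) + (h / (2 * eps ^ 2)) * (a ^ 3 - a) = 0.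
Proof.
  intros He Hh H. unfold cn_step in H.
  assert (E: h * ((b - a) / h + (b ^ 3 - b) / (2 * eps ^ 2) + (a ^ 3 - a) / (2 * eps ^ 2))
    = b - a + (h / (2 * eps ^ 2)) * (b ^ 3 - b) + (h / (2 * eps ^ 2)) * (a ^ 3 - a)).
  { field. split; nra. }
  rewrite <- E, H. ring.
Qed.

Lemma lemA k a b : 0 < k -> k <= 1/2 -> 0 <= a <= 1 ->
  b - a + k * (b ^ 3 - b) + k * (a ^ 3 - a) = 0 -> a <= b <= 1.
Proof.
  intros Hk Hk2 Ha H. split.
  - destruct (Rle_dec a b) as [|Hn]; [assumption|]. exfalso.
    assert (b < a) by lra.
    assert (0 <= a*a + a*b + b*b) by nra.
    assert (0 < (a - b) * ((1 - k) + k * (a*a + a*b + b*b))) by (apply Rmult_lt_0_compat; [lra| assert (0 <= k * (a*a + a*b + b*b)) by (apply Rmult_le_pos; nra); lra]).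
    assert (a^3 - a <= 0) by (replace (a^3-a) with (-(a*(1-a*a))) by ring; assert (0 <= a*(1-a*a)) by (apply Rmult_le_pos; nra); lra).
    assert (Id: (a + k*(a^3-a)) - (b + k*(b^3-b)) = (a - b) * ((1 - k) + k * (a*a + a*b + b*b))) by ring.
    nra.
  - destruct (Rle_dec b 1) as [|Hn]; [assumption|]. exfalso.
    assert (1 < b) by lra.
    assert (0 < (b - 1) * ((1 - k) + k * (b*b + b + 1))) by (apply Rmult_lt_0_compat; [lra| assert (0 <= k * (b*b + b + 1)) by (apply Rmult_le_pos; nra); lra]).
    assert (0 <= (1 - a) * (1 - k*a - k*a*a)) by (apply Rmult_le_pos; [lra| assert (k*(a*a+a) <= k*2) by (apply Rmult_le_compat_l; nra); nra]).
    assert (Id1: (b + k*(b^3-b)) - 1 = (b - 1) * ((1 - k) + k * (b*b + b + 1))) by ring.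
    assert (Id2: 1 - (a - k*(a^3-a)) = (1 - a) * (1 - k*a - k*a*a)) by ring.
    lra.
Qed.

Lemma lemB k a b : 0 < k -> k * (a * a + a) <= 1 -> 1 <= a ->
  b - a + k * (b ^ 3 - b) + k * (a ^ 3 - a) = 0 -> 1 <= b <= a.
Proof.
  intros Hk Hk2 Ha H.
  assert (k <= 1/2) by nra. split.
  - destruct (Rle_dec 1 b) as [|Hn]; [assumption|]. exfalso.
    assert (b < 1) by lra.
    assert (0 < (1 - b) * ((1 - k) + k * (b*b + b + 1))) by (apply Rmult_lt_0_compat; [lra| assert (0 <= k * (b*b + b + 1)) by (apply Rmult_le_pos; nra); lra]).
    assert (0 <= (a - 1) * (1 - k*a - k*a*a)) by (apply Rmult_le_pos; [lra| nra]).
    assert (Id1: 1 - (b + k*(b^3-b)) = (1 - b) * ((1 - k) + k * (b*b + b + 1))) by ring.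
    assert (Id2: (a - k*(a^3-a)) - 1 = (a - 1) * (1 - k*a - k*a*a)) by ring.
    lra.
  - destruct (Rle_dec b a) as [|Hn]; [assumption|]. exfalso.
    assert (a < b) by lra.
    assert (0 <= a*a + a*b + b*b) by nra.
    assert (0 < (b - a) * ((1 - k) + k * (a*a + a*b + b*b))) by (apply Rmult_lt_0_compat; [lra| assert (0 <= k * (a*a + a*b + b*b)) by (apply Rmult_le_pos; nra); lra]).
    assert (0 <= a^3 - a) by (replace (a^3-a) with (a*(a*a-1)) by ring; apply Rmult_le_pos; nra).
    assert (Id: (b + k*(b^3-b)) - (a + k*(a^3-a)) = (b - a) * ((1 - k) + k * (a*a + a*b + b*b))) by ring.
    nra.
Qed.

Lemma energy_le eps a b : 0 < eps -> (b^2-1)^2 <= (a^2-1)^2 -> energy eps b <= energy eps a.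
Proof.
  intros He H. unfold energy, Rdiv. apply Rmult_le_compat_r; [|exact H].
  left. apply Rinv_0_lt_compat. nra.
Qed.

Theorem theorem3p3 (eps u0 h : R) (u : nat -> R) :
  0 < eps < 1 ->
  u0 <> 0 -> u0 <> 1 -> u0 <> -1 ->
  0 < h <= hstar eps u0 ->
  u 0%nat = u0 ->
  (forall n : nat, (1 <= n)%nat -> cn_step eps h (u (n - 1)%nat) (u n)) ->
  forall n : nat, (1 <= n)%nat -> energy eps (u n) <= energy eps (u (n - 1)%nat).
Proof.
  intros He H0 H1 H2 [Hh Hhs] Hu0 Hstep.
  set (k := h / (2 * eps ^ 2)).
  assert (Hk : 0 < k). { unfold k. apply Rdiv_lt_0_compat; nra. }
  set (s := if Rle_dec 0 u0 then 1 else -1).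
  set (v := fun n => s * u n).
  assert (Hs2 : s * s = 1) by (unfold s; destruct Rle_dec; lra).
  assert (Hv0 : v 0%nat = Rabs u0).
  { unfold v, s. rewrite Hu0. destruct Rle_dec.
    - rewrite Rabs_right; lra.
    - rewrite Rabs_left; lra. }
  assert (Hvs : forall n, (1 <= n)%nat ->
    v n - v (n-1)%nat + k * (v n ^ 3 - v n) + k * (v (n-1)%nat ^ 3 - v (n-1)%nat) = 0).
  { intros n Hn. pose proof (step_eq eps h _ _ ltac:(lra) Hh (Hstep n Hn)) as E.
    fold k in E. unfold v.
    assert (Hs3 : s ^ 3 - s = 0) by (simpl; rewrite Rmult_1_r; rewrite <- Rmult_assoc, Hs2; ring).
    assert (D : (s * u n - s * u (n - 1)%nat + k * ((s * u n) ^ 3 - s * u n) +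
       k * ((s * u (n - 1)%nat) ^ 3 - s * u (n - 1)%nat))
     - s * (u n - u (n - 1)%nat + k * (u n ^ 3 - u n) + k * (u (n - 1)%nat ^ 3 - u (n - 1)%nat))
     = k * (s ^ 3 - s) * (u n ^ 3 + u (n - 1)%nat ^ 3)) by ring.
    rewrite E, Hs3 in D. lra. }
  assert (Hen : forall n, energy eps (u n) = energy eps (v n)).
  { intro n. unfold energy, v. f_equal. simpl. rewrite !Rmult_1_r.
    replace (s * u n * (s * u n)) with (s*s*(u n * u n)) by ring. rewrite Hs2. ring. }
  intros n Hn. rewrite !Hen. apply energy_le; [lra|].
  assert (Habs : 0 < Rabs u0) by (apply Rabs_pos_lt; exact H0).
  unfold hstar in Hhs. destruct (Rlt_dec 1 (Rabs u0)) as [Hgt|Hle].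
  - assert (Hkd : k * (Rabs u0 * Rabs u0 + Rabs u0) <= 1).
    { unfold k. apply (Rmult_le_compat_r (Rabs u0 * Rabs u0 + Rabs u0)) in Hhs; [|nra].
      replace (2 * eps ^ 2 / (u0 ^ 2 + Rabs u0) * (Rabs u0 * Rabs u0 + Rabs u0))
        with (2 * eps ^ 2) in Hhs.
      2:{ replace (u0^2) with (Rabs u0 * Rabs u0).
          - field. nra.
          - rewrite <- Rabs_mult. simpl. rewrite Rmult_1_r. apply Rabs_right. nra. }
      apply (Rmult_le_reg_r (2 * eps ^ 2)); [nra|].
      replace (h / (2 * eps ^ 2) * (Rabs u0 * Rabs u0 + Rabs u0) * (2 * eps ^ 2))
        with (h * (Rabs u0 * Rabs u0 + Rabs u0)) by (field; nra). lra. }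
    assert (Inv : forall m, 1 <= v m <= Rabs u0).
    { induction m as [|m IH]. { rewrite Hv0. lra. }
      pose proof (Hvs (S m) ltac:(lia)) as E. simpl in E. rewrite Nat.sub_0_r in E.
      assert (k * (v m * v m + v m) <= 1) by nra.
      pose proof (lemB k (v m) (v (S m)) Hk H ltac:(lra) E). lra. }
    pose proof (Hvs n Hn) as E.
    pose proof (Inv (n-1)%nat).
    assert (k * (v (n-1)%nat * v (n-1)%nat + v (n-1)%nat) <= 1) by nra.
    pose proof (lemB k _ _ Hk H3 ltac:(lra) E).
    set (a := v (n-1)%nat) in *. set (b := v n) in *.
    assert (Id : (a^2-1)^2 - (b^2-1)^2 = ((a-b)*(a+b))*(a*a+b*b-2)) by ring.
    assert (0 <= ((a-b)*(a+b))*(a*a+b*b-2)) by (apply Rmult_le_pos; [apply Rmult_le_pos|]; nra).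
    lra.
  - assert (Hk2 : k <= 1/2).
    { unfold k. apply (Rmult_le_reg_r (2 * eps ^ 2)); [nra|].
      replace (h / (2 * eps ^ 2) * (2 * eps ^ 2)) with h by (field; nra). lra. }
    assert (Hlt : Rabs u0 <= 1) by lra.
    assert (Inv : forall m, 0 <= v m <= 1).
    { induction m as [|m IH]. { rewrite Hv0. lra. }
      pose proof (Hvs (S m) ltac:(lia)) as E. simpl in E. rewrite Nat.sub_0_r in E.
      pose proof (lemA k (v m) (v (S m)) Hk Hk2 IH E). lra. }
    pose proof (Hvs n Hn) as E.
    pose proof (lemA k _ _ Hk Hk2 (Inv (n-1)%nat) E).
    pose proof (Inv (n-1)%nat).
    set (a := v (n-1)%nat) in *. set (b := v n) in *.
    assert (Id : (a^2-1)^2 - (b^2-1)^2 = ((b-a)*(a+b))*(2-a*a-b*b)) by ring.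
    assert (0 <= ((b-a)*(a+b))*(2-a*a-b*b)) by (apply Rmult_le_pos; [apply Rmult_le_pos|]; [lra|lra|]; assert (a*a<=1) by nra; assert (b*b<=1) by nra; lra).
    lra.
Qed.
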